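(* Let $\mathcal{H}$ and $\mathcal{K}$ be finite-dimensional complex Hilbert spaces and let $\mathcal{E}$ be a quantum channel (completely positive trace-preserving linear map) from operators on $\mathcal{H}$ to operators on $\mathcal{K}$, with adjoint $\mathcal{E}^\dagger$. Let $A(0)=\sum_i a_i(0)\,\Pi_i(0)$ be a Hermitian operator on $\mathcal{H}$ and $B(t)=\sum_f b_f(t)\,\Xi_f(t)$ a Hermitian operator on $\mathcal{K}$, written in their spectral decompositions (so $\{\Pi_i(0)\}_i$ and $\{\Xi_f(t)\}_f$ are families of mutually orthogonal projectors summing to the identity). Suppose that $[\Pi_i(0),\mathcal{E}^\dagger(\Xi_f(t))]\neq 0$ for some pair $(i,f)$. Then there exists no family of functions $\rho\mapsto p_{if}(\rho)$, defined on all density operators $\rho$ on $\mathcal{H}$ and taking values in $[0,\infty)$ (i.e. each $(p_{if}(\rho))_{i,f}$ is a probability distribution), satisfying both: (a) correct marginals: for all $\rho$, $\sum_f p_{if}(\rho)=\mathrm{Tr}(\Pi_i(0)\rho)$ for every $i$ and $\sum_i p_{if}(\rho)=\mathrm{Tr}(\Xi_f(t)\mathcal{E}(\rho))$ for every $f$; (b) convex-linearity: whenever $\rho=\sum_k p_k\rho_k$ is a convex combination of density operators, $p_{if}(\rho)=\sum_k p_k\, p_{if}(\rho_k)$ for all $i,f$.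
   Context: The adjoint $\mathcal{E}^\dagger$ of a channel $\mathcal{E}$ is the linear map defined by $\mathrm{Tr}(X\,\mathcal{E}(Y))=\mathrm{Tr}(\mathcal{E}^\dagger(X)\,Y)$ for all operators $X$ on $\mathcal{K}$ and $Y$ on $\mathcal{H}$; if $\mathcal{E}(\rho)=\sum_k K_k\rho K_k^\dagger$ then $\mathcal{E}^\dagger(X)=\sum_k K_k^\dagger X K_k$. *)

(* Defs.v *)
From HB Require Import structures.
From mathcomp Require Import all_boot all_order all_algebra.
From mathcomp Require Import complex mxtens.
From mathcomp Require Import reals.
Set Implicit Arguments. Unset Strict Implicit. Unset Printing Implicit Defensive.
Import Order.TTheory GRing.Theory Num.Theory.
Local Open Scope ring_scope.

Section QDefs.
Variable C : numClosedFieldType.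

Definition mxH (p q : nat) (M : 'M[C]_(p, q)) : 'M[C]_(q, p) := (map_mx Num.conj M)^T.

Definition hermitian (n : nat) (M : 'M[C]_n) : Prop := mxH M = M.

Definition psd (n : nat) (M : 'M[C]_n) : Prop :=
  hermitian M /\ forall v : 'cV[C]_n, 0 <= (mxH v *m M *m v) 0 0.

Definition density (n : nat) (rho : 'M[C]_n) : Prop := psd rho /\ \tr rho = 1.

Definition projector (n : nat) (P : 'M[C]_n) : Prop := hermitian P /\ P *m P = P.

Definition pvm (n : nat) (I : finType) (P : I -> 'M[C]_n) : Prop :=
  [/\ forall i, projector (P i),
      forall i j, i != j -> P i *m P j = 0
    & \sum_i P i = 1%:M].

Definition spectral_decomp (n : nat) (I : finType) (A : 'M[C]_n)
    (a : I -> C) (P : I -> 'M[C]_n) : Prop :=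
  [/\ hermitian A, pvm P, forall i, P i != 0,
      (injective a /\ forall i, a i \is Num.real) & A = \sum_i a i *: P i].

Definition mxblk (k n : nat) (X : 'M[C]_(k * n)) (a b : 'I_k) : 'M[C]_n :=
  \matrix_(i, j) X (mxtens_index (a, i)) (mxtens_index (b, j)).

(* ampliation id_k (x) E acting on M_k (x) M_n = M_(k*n) *)
Definition ampl (n m k : nat) (E : 'M[C]_n -> 'M[C]_m) (X : 'M[C]_(k * n))
  : 'M[C]_(k * m) :=
  \matrix_(r, c) E (mxblk X (mxtens_unindex r).1 (mxtens_unindex c).1)
                   (mxtens_unindex r).2 (mxtens_unindex c).2.

Definition completely_positive (n m : nat) (E : 'M[C]_n -> 'M[C]_m) : Prop :=
  forall (k : nat) (X : 'M[C]_(k * n)), psd X -> psd (@ampl n m k E X).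

Definition trace_preserving (n m : nat) (E : 'M[C]_n -> 'M[C]_m) : Prop :=
  forall X, \tr (E X) = \tr X.

(* quantum channel: CPTP linear map (linearity is carried by the {linear} type) *)
Definition channel (n m : nat) (E : {linear 'M[C]_n -> 'M[C]_m}) : Prop :=
  completely_positive E /\ trace_preserving E.

Definition is_adjoint (n m : nat) (E : 'M[C]_n -> 'M[C]_m) (Ed : 'M[C]_m -> 'M[C]_n)
  : Prop := forall (X : 'M[C]_m) (Y : 'M[C]_n), \tr (X *m E Y) = \tr (Ed X *m Y).

End QDefs.

(* Main.v *)
Require Import Defs.
From HB Require Import structures.
From mathcomp Require Import all_boot all_order all_algebra.
From mathcomp Require Import complex mxtens.
From mathcomp Require Import reals.
From mathcomp Require Import ring lra.
Import Order.TTheory GRing.Theory Num.Theory.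
Local Open Scope ring_scope.


Section MxH.
Variable C : numClosedFieldType.
Lemma mxH_mul p q r (A : 'M[C]_(p,q)) (B : 'M[C]_(q,r)) : mxH (A *m B) = mxH B *m mxH A.
Proof. by rewrite /mxH map_mxM trmx_mul. Qed.
Lemma mxHK p q (A : 'M[C]_(p,q)) : mxH (mxH A) = A.
Proof. by apply/matrixP=> i j; rewrite !mxE conjCK. Qed.
Lemma mxHD p q (A B : 'M[C]_(p,q)) : mxH (A + B) = mxH A + mxH B.
Proof. by apply/matrixP=> i j; rewrite !mxE rmorphD. Qed.
Lemma mxHN p q (A : 'M[C]_(p,q)) : mxH (- A) = - mxH A.
Proof. by apply/matrixP=> i j; rewrite !mxE rmorphN. Qed.
Lemma mxHZ p q c (A : 'M[C]_(p,q)) : mxH (c *: A) = c^* *: mxH A.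
Proof. by apply/matrixP=> i j; rewrite !mxE rmorphM. Qed.
Lemma mxH0 p q : mxH (0 : 'M[C]_(p,q)) = 0.
Proof. by apply/matrixP=> i j; rewrite !mxE rmorph0. Qed.
Lemma mxH_delta p (r : 'I_p) : mxH (delta_mx r (0:'I_1)) = delta_mx (0:'I_1) r :> 'M[C]_(1,p).
Proof. by apply/matrixP=> i j; rewrite !mxE conjC_nat andbC. Qed.
Lemma mxH00 (A : 'M[C]_1) : mxH A 0 0 = (A 0 0)^*.
Proof. by rewrite !mxE. Qed.
Lemma mul11 p (A : 'M[C]_(1,p)) (B : 'M[C]_(p,1)) : \tr (B *m A) = (A *m B) 0 0.
Proof. by rewrite mxtrace_mulC /mxtrace big_ord1. Qed.
Lemma mulE11 (A B : 'M[C]_1) : (A *m B) 0 0 = A 0 0 * B 0 0.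
Proof. by rewrite mxE big_ord1. Qed.
End MxH.

Lemma lec0R (R : realType) (x : R) : (0 <= real_complex R x) = (0 <= x).
Proof. by rewrite /Num.le /= eqxx. Qed.
Lemma ReK (R : realType) (z : R[i]) : 0 <= z -> real_complex R (complex.Re z) = z.
Proof. by case: z => a b; rewrite /Num.le /= => /andP[/eqP -> _]. Qed.
Lemma conj_rc (R : realType) (t : R) : 0 <= t -> (real_complex R t)^* = real_complex R t.
Proof. by move=> t0; rewrite geC0_conj // lec0R. Qed.

Lemma scale_combo (K : comNzRingType) (M : lmodType K) (s a b x y : K) (u v : M) :
  s *: (a *: (x *: u) + b *: (y *: v)) = (s * (a * x)) *: u + (s * (b * y)) *: v.
Proof. by rewrite scalerDr !scalerA !mulrA. Qed.
Lemma tr_combo (K : comNzRingType) k (a b : K) (A B : 'M[K]_k) :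
  \tr (a *: A + b *: B) = a * \tr A + b * \tr B.
Proof. by rewrite mxtraceD !mxtraceZ. Qed.
Lemma sum0l (T : realDomainType) (x y : T) : 0 <= x -> 0 <= y -> x + y = 0 -> x = 0.
Proof. move=> hx hy e; apply/eqP; move: e => /eqP; rewrite paddr_eq0 //; by case/andP. Qed.

Section Ids.
Variable C : numClosedFieldType.
Variable k : nat.
Implicit Types x y u w : 'cV[C]_k.
Lemma id_R1 x y (c : C) : c^* = c ->
  (x + c *: y) *m mxH (x + c *: y) + c *: ((x - y) *m mxH (x - y))
  = (1 + c) *: (x *m mxH x) + (c * (1 + c)) *: (y *m mxH y).
Proof.
move=> cc; rewrite !mxHD mxHZ mxHN cc.
rewrite !mulmxDl !mulmxDr -!scalemxAl -!scalemxAr !mulNmx !mulmxN.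
move: (x *m mxH x) (x *m mxH y) (y *m mxH x) (y *m mxH y) => A B B' D.
by apply/matrixP => r s; rewrite !mxE; ring.
Qed.
Lemma id_R2 x y :
  (x + y) *m mxH (x + y) + (x - y) *m mxH (x - y)
  = 2 *: (x *m mxH x) + 2 *: (y *m mxH y).
Proof.
rewrite !mxHD mxHN !mulmxDl !mulmxDr !mulNmx !mulmxN.
move: (x *m mxH x) (x *m mxH y) (y *m mxH x) (y *m mxH y) => A B B' D.
by apply/matrixP => r s; rewrite !mxE; ring.
Qed.
Lemma id_N x : (- x) *m mxH (- x) = x *m mxH x.
Proof. by rewrite mxHN mulNmx mulmxN opprK. Qed.
Lemma id_Q u w (X : 'M[C]_k) :
  (mxH (u + w) *m X *m (u + w)) 0 0 - (mxH (u - w) *m X *m (u - w)) 0 0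
  = 2 * ((mxH u *m X *m w) 0 0 + (mxH w *m X *m u) 0 0).
Proof.
rewrite !mxHD mxHN !mulmxDl !mulmxDr !mulNmx !mulmxN.
move: (mxH u *m X *m u) (mxH u *m X *m w) (mxH w *m X *m u) (mxH w *m X *m w) => A B B' D.
by rewrite !mxE; ring.
Qed.
Lemma id_i u w (X : 'M[C]_k) :
  (mxH u *m X *m ('i *: w)) 0 0 + (mxH ('i *: w) *m X *m u) 0 0
  = 'i * ((mxH u *m X *m w) 0 0 - (mxH w *m X *m u) 0 0).
Proof.
rewrite mxHZ conjCi -!scalemxAr -!scalemxAl.
move: (mxH u *m X *m w) (mxH w *m X *m u) => A B.
by rewrite !mxE; ring.
Qed.
End Ids.


Section Main.
Variables (R : realType) (n : nat).
Local Notation C := R[i].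
Local Notation rc := (real_complex R).

Definition vn := locked (fun v : 'cV[C]_n => (mxH v *m v) 0 0 : C).
Lemma vnD v : vn v = (mxH v *m v) 0 0. Proof. by rewrite /vn -lock. Qed.
Definition outer := locked (fun v : 'cV[C]_n => v *m mxH v : 'M[C]_n).
Lemma outerD v : outer v = v *m mxH v. Proof. by rewrite /outer -lock. Qed.
Definition dens0 (v : 'cV[C]_n) : 'M[C]_n := (vn v)^-1 *: outer v.
Definition sn := locked (fun v : 'cV[C]_n => complex.Re (vn v) : R).
Lemma snD v : sn v = complex.Re (vn v). Proof. by rewrite /sn -lock. Qed.

Lemma vnE v : vn v = \sum_j (v j 0) * (v j 0)^*.
Proof. by rewrite vnD mxE; apply: eq_bigr => j _; rewrite !mxE mulrC. Qed.

Lemma vn_ge0 v : 0 <= vn v.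
Proof. by rewrite vnE; apply: sumr_ge0 => j _; apply: mul_conjC_ge0. Qed.

Lemma vn_eq0 v : vn v = 0 -> v = 0.
Proof.
rewrite vnE => /psumr_eq0P h; apply/matrixP => j k; rewrite ord1 mxE.
apply/eqP; rewrite -mul_conjC_eq0; apply/eqP; apply: h => // i _.
exact: mul_conjC_ge0.
Qed.

Lemma snE v : rc (sn v) = vn v.
Proof. rewrite snD; exact: ReK (vn_ge0 v). Qed.

Lemma sn_ge0 v : 0 <= sn v.
Proof. by rewrite -lec0R snE vn_ge0. Qed.

Lemma vn0 : vn 0 = 0.
Proof. by rewrite vnD mulmx0 mxE. Qed.

Lemma sn0 : sn 0 = 0.
Proof. by apply: complexI; rewrite snE vn0. Qed.

Lemma tr_outer (M : 'M[C]_n) v : \tr (M *m outer v) = (mxH v *m M *m v) 0 0.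
Proof. by rewrite outerD mulmxA mul11 mulmxA. Qed.

Lemma tr_outer1 v : \tr (outer v) = vn v.
Proof. by rewrite -[outer v]mul1mx tr_outer mulmx1 vnD. Qed.

Lemma dens0_density v : v != 0 -> density (dens0 v).
Proof.
move=> v0; have vn0' : vn v != 0 by apply: contra v0 => /eqP/vn_eq0 ->.
have cc : ((vn v)^-1)^* = (vn v)^-1 by apply: geC0_conj; rewrite invr_ge0 vn_ge0.
split; [split|].
- by rewrite /Defs.hermitian /dens0 mxHZ cc outerD mxH_mul mxHK.
- move=> x; rewrite /dens0 -scalemxAr -scalemxAl mxE outerD mulmxA.
  rewrite -(mulmxA (mxH x *m v)) mulE11.
  have -> : (mxH v *m x) 0 0 = ((mxH x *m v) 0 0)^*.
    by rewrite -mxH00 mxH_mul mxHK.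
  by apply: mulr_ge0; [rewrite invr_ge0 vn_ge0 | apply: mul_conjC_ge0].
- by rewrite /dens0 mxtraceZ tr_outer1 mulVf.
Qed.

Variable rho0 : 'M[C]_n.
Hypothesis hrho0 : density rho0.

Definition dens := locked (fun v : 'cV[C]_n => if v == 0 then rho0 else dens0 v : 'M[C]_n).
Lemma densD v : dens v = if v == 0 then rho0 else dens0 v. Proof. by rewrite /dens -lock. Qed.

Lemma dens_density v : density (dens v).
Proof. by rewrite densD; case: eqP => // /eqP; apply: dens0_density. Qed.

Lemma outer_dens v : outer v = rc (sn v) *: dens v.
Proof.
rewrite densD; case: eqP => [->|/eqP v0].
  by rewrite sn0 rmorph0 scale0r outerD mul0mx.
have vn0' : vn v != 0 by apply: contra v0 => /eqP/vn_eq0 ->.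
by rewrite /dens0 snE scalerA divff // scale1r.
Qed.

Lemma tr_dens (M : 'M[C]_n) v : rc (sn v) * \tr (M *m dens v) = (mxH v *m M *m v) 0 0.
Proof. by rewrite -mxtraceZ scalemxAr -outer_dens tr_outer. Qed.

Variables (m : nat) (E : {linear 'M[C]_n -> 'M[C]_m}) (Ed : 'M[C]_m -> 'M[C]_n)
  (I F : finType) (Pi : I -> 'M[C]_n) (Xi : F -> 'M[C]_m) (p : 'M[C]_n -> I -> F -> R).
Hypothesis hadj : is_adjoint E Ed.
Hypothesis hp0 : forall rho, density rho -> forall i f, 0 <= p rho i f.
Hypothesis hmarg : forall rho, density rho ->
             (forall i, real_complex R (\sum_f p rho i f) = \tr (Pi i *m rho)) /\
             (forall f, real_complex R (\sum_i p rho i f) = \tr (Xi f *m E rho)).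
Hypothesis hconv : forall (N : nat) (w : 'I_N -> R) (rhos : 'I_N -> 'M[C]_n),
             (forall k, 0 <= w k) -> \sum_k w k = 1 ->
             (forall k, density (rhos k)) ->
             forall i f,
               p (\sum_k real_complex R (w k) *: rhos k) i f
               = \sum_k w k * p (rhos k) i f.

Definition P := locked (fun (k : I) (f : F) (v : 'cV[C]_n) => sn v * p (dens v) k f : R).
Lemma PD k f v : P k f v = sn v * p (dens v) k f. Proof. by rewrite /P -lock. Qed.

Lemma P_ge0 k f (v : 'cV[C]_n) : 0 <= P k f v.
Proof. by rewrite PD; apply: mulr_ge0; [apply: sn_ge0 | apply: hp0; apply: dens_density]. Qed.

Lemma conv2 (a1 a2 : R) (r1 r2 : 'M[C]_n) k f : 0 <= a1 -> 0 <= a2 -> a1 + a2 = 1 ->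
  density r1 -> density r2 ->
  p (rc a1 *: r1 + rc a2 *: r2) k f = a1 * p r1 k f + a2 * p r2 k f.
Proof.
move=> h1 h2 h12 d1 d2.
have := @hconv 2 (fun j => if val j == 0%N then a1 else a2)
  (fun j => if val j == 0%N then r1 else r2).
move=> H.
have -> : rc a1 *: r1 + rc a2 *: r2 = \sum_(j < 2) rc (if val j == 0%N then a1 else a2) *:
   (if val j == 0%N then r1 else r2) by rewrite !big_ord_recl big_ord0 /= addr0.
rewrite H.
- by rewrite !big_ord_recl big_ord0 /= addr0.
- by move=> j; case: ifP.
- by rewrite !big_ord_recl big_ord0 /= addr0.
- by move=> j; case: ifP.
Qed.

Lemma convS (a1 a2 : R) (v1 v2 : 'cV[C]_n) k f : 0 <= a1 -> 0 <= a2 -> 0 < a1 * sn v1 + a2 * sn v2 ->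
  p (rc (a1 * sn v1 + a2 * sn v2)^-1 *: (rc a1 *: outer v1 + rc a2 *: outer v2)) k f
    * (a1 * sn v1 + a2 * sn v2) = a1 * P k f v1 + a2 * P k f v2.
Proof.
move=> h1 h2; set S := _ + _ => hS.
rewrite !outer_dens scale_combo -!rmorphM conv2.
- rewrite !PD; field; lra.
- by apply: mulr_ge0; [rewrite invr_ge0 ltW|apply: mulr_ge0 => //; apply: sn_ge0].
- by apply: mulr_ge0; [rewrite invr_ge0 ltW|apply: mulr_ge0 => //; apply: sn_ge0].
- by rewrite -mulrDr mulVf // gt_eqF.
- exact: dens_density.
- exact: dens_density.
Qed.

Lemma trc (a1 a2 : R) (v1 v2 : 'cV[C]_n) :
  \tr (rc a1 *: outer v1 + rc a2 *: outer v2) = rc (a1 * sn v1 + a2 * sn v2).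
Proof. by rewrite mxtraceD !mxtraceZ !tr_outer1 -!snE rmorphD !rmorphM. Qed.

Lemma key22 (a1 a2 b1 b2 : R) (v1 v2 w1 w2 : 'cV[C]_n) k f :
  0 <= a1 -> 0 <= a2 -> 0 <= b1 -> 0 <= b2 ->
  rc a1 *: outer v1 + rc a2 *: outer v2 = rc b1 *: outer w1 + rc b2 *: outer w2 ->
  a1 * P k f v1 + a2 * P k f v2 = b1 * P k f w1 + b2 * P k f w2.
Proof.
move=> ha1 ha2 hb1 hb2 e.
have eS : a1 * sn v1 + a2 * sn v2 = b1 * sn w1 + b2 * sn w2.
  by apply: complexI; rewrite -!trc e.
have q1 := mulr_ge0 ha1 (sn_ge0 v1); have q2 := mulr_ge0 ha2 (sn_ge0 v2).
have q3 := mulr_ge0 hb1 (sn_ge0 w1); have q4 := mulr_ge0 hb2 (sn_ge0 w2).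
have [S0|SP] := eqVneq (a1 * sn v1 + a2 * sn v2) 0.
  have S0' := S0; rewrite eS in S0'.
  have x1 := @sum0l _ _ _ q1 q2 S0.
  have x2 : a2 * sn v2 = 0 by apply: (@sum0l _ _ _ q2 q1); rewrite addrC.
  have x3 := @sum0l _ _ _ q3 q4 S0'.
  have x4 : b2 * sn w2 = 0 by apply: (@sum0l _ _ _ q4 q3); rewrite addrC.
  move: x1 x2 x3 x4; rewrite !PD.
  move: (sn v1) (sn v2) (sn w1) (sn w2) (p (dens v1) k f) (p (dens v2) k f) (p (dens w1) k f) (p (dens w2) k f).
  by move=> s1 s2 s3 s4 r1 r2 r3 r4 x1 x2 x3 x4; rewrite !mulrA x1 x2 x3 x4 !mul0r addr0.
have Sp : 0 < a1 * sn v1 + a2 * sn v2 by rewrite lt_def SP /= addr_ge0.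
have Tp : 0 < b1 * sn w1 + b2 * sn w2 by rewrite -eS.
have h1 := @convS _ _ _ _ k f ha1 ha2 Sp; have h2 := @convS _ _ _ _ k f hb1 hb2 Tp.
by rewrite -h1 -h2 e eS.
Qed.

Lemma Pzero k f (v : 'cV[C]_n) : Pi k *m v = 0 -> P k f v = 0.
Proof.
move=> hv; rewrite PD.
have [->|v0] := eqVneq v 0; first by rewrite sn0 mul0r.
have vn0' : vn v != 0 by apply: contra v0 => /eqP/vn_eq0 ->.
have d := dens_density v.
have h := (@hmarg _ d).1 k.
have hs : \sum_f0 p (dens v) k f0 = 0.
  apply: complexI; rewrite h rmorph0.
  apply: (mulfI (x := rc (sn v))); first by rewrite snE.
  by rewrite tr_dens -mulmxA hv mulmx0 mxE mulr0.
have := psumr_eq0P (fun f0 _ => @hp0 _ d k f0) hs.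
by move=> ->; rewrite ?mulr0.
Qed.

Lemma Pneg k f (v : 'cV[C]_n) : P k f (- v) = P k f v.
Proof.
have := @key22 1 0 1 0 (- v) 0 v 0 k f ler01 (lexx _) ler01 (lexx _).
rewrite !outerD id_N => /(_ erefl).
by move: (P k f (- v)) (P k f v) (P k f 0) => a b c; rewrite !mul1r !mul0r !addr0.
Qed.

Lemma lim_le (a b : R) : (forall t, 0 < t -> a <= (1 + t) * b) -> 0 <= b -> a <= b.
Proof.
move=> H b0; rewrite leNgt; apply/negP => hab.
have b1 : b + 1 != 0 by rewrite gt_eqF // ltr_wpDl.
set t := (a - b) / (b + 1).
have tp : 0 < t by rewrite divr_gt0 ?subr_gt0 // ltr_wpDl.
have e : t * (b + 1) = a - b by rewrite /t mulfVK.
have := H t tp; move: e; rewrite mulrDr mulrDl mul1r mulr1 mulrC.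
move: (b * t) => bt; lra.
Qed.

Lemma step k f (x y : 'cV[C]_n) : P k f x = 0 -> P k f (x - y) <= P k f y.
Proof.
move=> hx; apply: lim_le; last exact: P_ge0.
move=> t tp.
have t0 : 0 <= t by apply: ltW.
have e0 : outer (x + rc t *: y) + rc t *: outer (x - y)
       = (1 + rc t) *: outer x + (rc t * (1 + rc t)) *: outer y.
  rewrite !outerD; exact (@id_R1 _ _ x y (rc t) (@conj_rc _ _ t0)).
have e : rc 1 *: outer (x + rc t *: y) + rc t *: outer (x - y)
       = rc (1 + t) *: outer x + rc (t * (1 + t)) *: outer y.
  rewrite rmorph1 scale1r rmorphD rmorph1 rmorphM rmorphD rmorph1.
  exact e0.
have := @key22 1 t (1 + t) (t * (1 + t)) _ _ _ _ k f ler01 t0 (addr_ge0 ler01 t0) (mulr_ge0 t0 (addr_ge0 ler01 t0)) e.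
rewrite hx mulr0 add0r mul1r.
have := P_ge0 k f (x + rc t *: y).
move: (P k f (x + rc t *: y)) (P k f (x - y)) (P k f y) => a b c a0 H.
have : t * b <= t * ((1 + t) * c) by rewrite mulrA -H; lra.
by rewrite ler_pM2l.
Qed.

Lemma PL k f (x y : 'cV[C]_n) : P k f x = 0 -> P k f (x + y) = P k f (x - y).
Proof.
move=> hx.
have h1 := @step k f x y hx.
have h2 := @step k f x (- y) hx.
rewrite opprK Pneg in h2.
have e : rc 1 *: outer (x + y) + rc 1 *: outer (x - y) = rc 2 *: outer x + rc 2 *: outer y.
  rewrite !rmorph1 !scale1r rmorph_nat !outerD; exact (@id_R2 _ _ x y).
have := @key22 1 1 2 2 (x + y) (x - y) x y k f ler01 ler01 (ler0n _ 2) (ler0n _ 2) e.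
rewrite hx !mul1r mulr0 add0r.
move: h1 h2; move: (P k f (x + y)) (P k f (x - y)) (P k f y) => a b c.
lra.
Qed.

Lemma Qval f (v : 'cV[C]_n) : rc (\sum_k P k f v) = (mxH v *m Ed (Xi f) *m v) 0 0.
Proof.
rewrite (eq_bigr (fun k => sn v * p (dens v) k f)); last by move=> k _; rewrite PD.
rewrite -mulr_sumr.
have -> : rc (sn v * \sum_i p (dens v) i f) = rc (sn v) * rc (\sum_i p (dens v) i f).
  by rewrite rmorphM.
by rewrite ((@hmarg _ (dens_density v)).2 f) hadj tr_dens.
Qed.

Lemma core f (u w : 'cV[C]_n) : (forall k, Pi k *m u = 0 \/ Pi k *m w = 0) ->
  (mxH u *m Ed (Xi f) *m w) 0 0 + (mxH w *m Ed (Xi f) *m u) 0 0 = 0.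
Proof.
move=> H.
have hk k : P k f (u + w) = P k f (u - w).
  case: (H k) => hz.
    by apply: PL; apply: Pzero.
  rewrite addrC -opprB Pneg; apply: PL; exact: Pzero.
have eq : \sum_k P k f (u + w) = \sum_k P k f (u - w).
  by apply: eq_bigr => k _; exact: hk k.
have := congr1 rc eq; rewrite !Qval => e.
have := @id_Q _ _ u w (Ed (Xi f)); rewrite e subrr => /esym/eqP.
by rewrite mulf_eq0 pnatr_eq0 /= => /eqP.
Qed.
End Main.


Lemma ent (C : numClosedFieldType) k (M : 'M[C]_k) r s :
  (delta_mx (0:'I_1) r *m M *m delta_mx s (0:'I_1)) 0 0 = M r s.
Proof. by rewrite -rowE -colE !mxE. Qed.

Theorem theorem1 (R : realType) (n m : nat)
    (E : {linear 'M[R[i]]_n -> 'M[R[i]]_m}) (Ed : 'M[R[i]]_m -> 'M[R[i]]_n)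
    (I F : finType)
    (A : 'M[R[i]]_n) (a : I -> R[i]) (Pi : I -> 'M[R[i]]_n)
    (B : 'M[R[i]]_m) (b : F -> R[i]) (Xi : F -> 'M[R[i]]_m) :
  channel E ->
  is_adjoint E Ed ->
  spectral_decomp A a Pi ->
  spectral_decomp B b Xi ->
  (exists i f, Pi i *m Ed (Xi f) != Ed (Xi f) *m Pi i) ->
  ~ exists p : 'M[R[i]]_n -> I -> F -> R,
      [/\ (forall rho, density rho -> forall i f, 0 <= p rho i f),
          (forall rho, density rho ->
             (forall i, real_complex R (\sum_f p rho i f) = \tr (Pi i *m rho)) /\
             (forall f, real_complex R (\sum_i p rho i f) = \tr (Xi f *m E rho)))
        & (forall (N : nat) (w : 'I_N -> R) (rhos : 'I_N -> 'M[R[i]]_n),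
             (forall k, 0 <= w k) -> \sum_k w k = 1 ->
             (forall k, density (rhos k)) ->
             forall i f,
               p (\sum_k real_complex R (w k) *: rhos k) i f
               = \sum_k w k * p (rhos k) i f)].
Proof.
move=> hch hadj hA hB [i0 [f0 hnc]] [p [hp0 hmarg hconv]].
case: hA => _ [hproj horth hsum] _ _ _.
move: hnc; set X := Ed (Xi f0) => hnc.
have Z : (forall a b, a != b -> Pi a *m X *m Pi b = 0) -> False.
  move=> Z.
  have e1 : Pi i0 *m X = Pi i0 *m X *m Pi i0.
    rewrite -{1}[Pi i0 *m X]mulmx1 -hsum mulmx_sumr (bigD1 i0) //= big1 ?addr0 //.
    by move=> k hk; apply: Z; rewrite eq_sym.
  have e2 : X *m Pi i0 = Pi i0 *m X *m Pi i0.
    rewrite -{1}[X]mul1mx -hsum mulmx_suml mulmx_suml (bigD1 i0) //= big1 ?addr0 //.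
    by move=> k hk; apply: Z.
  by move: hnc; rewrite e1 e2 eqxx.
have [a1 [b1 [hab hM]]] : exists a1 b1, a1 != b1 /\ Pi a1 *m X *m Pi b1 != 0.
  case: (boolP [exists a1 : I, exists b1 : I, (a1 != b1) && (Pi a1 *m X *m Pi b1 != 0)]).
    by move/existsP => [a1 /existsP [b1 /andP [h1 h2]]]; exists a1, b1.
  rewrite negb_exists => /forallP H; exfalso; apply: Z => a1 b1 hab.
  have := H a1; rewrite negb_exists => /forallP /(_ b1).
  by rewrite negb_and hab /= negbK => /eqP.
have [r [s hrs]] : exists r s, (Pi a1 *m X *m Pi b1) r s != 0.
  case: (boolP [exists r, exists s, (Pi a1 *m X *m Pi b1) r s != 0]).
    by move/existsP => [r /existsP [s h]]; exists r, s.
  rewrite negb_exists => /forallP H; exfalso; move/eqP: hM; apply.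
  apply/matrixP => r s; have := H r; rewrite negb_exists => /forallP /(_ s).
  by rewrite negbK => /eqP ->; rewrite mxE.
set u := Pi a1 *m delta_mx r (0:'I_1).
set w := Pi b1 *m delta_mx s (0:'I_1).
have ue : (mxH u *m X *m w) 0 0 = (Pi a1 *m X *m Pi b1) r s.
  have -> : mxH u *m X *m w = delta_mx (0:'I_1) r *m (Pi a1 *m X *m Pi b1) *m delta_mx s (0:'I_1).
    by rewrite /u /w mxH_mul mxH_delta (hproj a1).1 !mulmxA.
  exact: ent.
have hyp k : Pi k *m u = 0 \/ Pi k *m w = 0.
  case: (eqVneq k a1) => [->|hka]; [right|left].
    by rewrite /w mulmxA horth // mul0mx.
  by rewrite /u mulmxA horth // mul0mx.
have u0 : u != 0.
  apply: contraNneq hrs => u0.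
  by rewrite -ue u0 mxH0 !mul0mx mxE.
have rho0d := @dens0_density _ _ _ u0.
have c1 := @core R n _ rho0d m E Ed I F Pi Xi p hadj hp0 hmarg hconv f0 u w hyp.
have hyp' k : Pi k *m u = 0 \/ Pi k *m ('i *: w) = 0.
  by case: (hyp k) => h; [left|right; rewrite -scalemxAr h scaler0].
have c2 := @core R n _ rho0d m E Ed I F Pi Xi p hadj hp0 hmarg hconv f0 u ('i *: w) hyp'.
move: c2; rewrite id_i -/X => /eqP; rewrite mulf_eq0 (negbTE (neq0Ci _)) /= subr_eq0 => /eqP c2.
move: c1; rewrite -/X -c2 => /eqP; rewrite -mulr2n mulrn_eq0 /= => /eqP c3.
by move: hrs; rewrite -ue c3 eqxx.
Qed.
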